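(* Let $k,q\ge0$, $p=k+q$, $m=2^p$, $n=2^q$, and $U_m=\frac{1}{\sqrt{2^p}}H(2^p)$. Fix $c$ with $0\le c\le 2^k-1$ and inject $n$ identical bosons in the input state $\vec s=(1+nc,2+nc,\dots,n+nc)$. Then an output state $\vec t=(t_1,\dots,t_n)$ is suppressed if and only if $\beta_q(t_1-1)\oplus\beta_q(t_2-1)\oplus\dots\oplus\beta_q(t_n-1)\neq0$, where $\beta_q(x)$ denotes the $q$ least significant bits of the binary representation of $x$ (equivalently, the $q$-bit binary representation of $x\bmod 2^q$).
   Context: For $m=2^p$, the Sylvester matrix $H(m)$ is defined recursively by $H(1)=[1]$ and $H(2^p)=\begin{bmatrix}H(2^{p-1})&H(2^{p-1})\\ H(2^{p-1})&-H(2^{p-1})\end{bmatrix}$, rows and columns indexed $1,\dots,m$. $\oplus$ denotes bitwise XOR. An $n$-particle state on $m$ modes is a nondecreasing tuple $\vec t=(t_1\le\dots\le t_n)$ with $t_i\in\{1,\dots,m\}$; $\mu_k(\vec t)=|\{i:t_i=k\}|$. For input $\vec s$ and output $\vec t$, the scattering matrix is $S_{i,j}=U_{t_i,s_j}$, and the bosonic amplitude is $\mathrm{perm}\,S/\sqrt{\prod_k\mu_k(\vec s)!\prod_k\mu_k(\vec t)!}$, where $\mathrm{perm}\,A=\sum_{\sigma\in S_n}\prod_i a_{i,\sigma(i)}$. An output state is suppressed if its amplitude is zero. *)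

(* Defs.v *)
From Stdlib Require PeanoNat.
From HB Require Import structures.
From mathcomp Require Import all_boot all_order all_algebra all_fingroup all_field.
Set Implicit Arguments. Unset Strict Implicit. Unset Printing Implicit Defensive.
Import Order.TTheory GRing.Theory Num.Theory.
Local Open Scope ring_scope.

(* Entries of the Sylvester matrix H(2^p), with 0-based indices i, j < 2^p,
   following the recursive block definition
   H(2^(p+1)) = [[H(2^p), H(2^p)], [H(2^p), -H(2^p)]]. *)
Fixpoint sylv0 (p i j : nat) : int :=
  match p with
  | 0 => 1
  | p'.+1 =>
    let h := (2 ^ p')%N in
    if (i < h)%N then
      (if (j < h)%N then sylv0 p' i j else sylv0 p' i (j - h))
    else
      (if (j < h)%N then sylv0 p' (i - h) j else - sylv0 p' (i - h) (j - h))
  end.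

(* H(2^p)_{i,j} with 1-based indices i, j in {1, ..., 2^p}. *)
Definition sylvester (p i j : nat) : int := sylv0 p i.-1 j.-1.

Definition Umat (p i j : nat) : algC :=
  (sylvester p i j)%:~R / sqrtC (2 ^ p)%:R.

Definition permanent (R : comNzRingType) (n : nat) (A : 'M[R]_n) : R :=
  \sum_(s : 'S_n) \prod_(i < n) A i (s i).

Definition mu (t : seq nat) (k : nat) : nat := count_mem k t.

Definition is_state (m n : nat) (t : n.-tuple nat) : bool :=
  sorted leq t && all (fun x => (0 < x <= m)%N) t.

Definition scattering (p n : nat) (s t : n.-tuple nat) : 'M[algC]_n :=
  \matrix_(i < n, j < n) Umat p (tnth t i) (tnth s j).

Definition amplitude (p n : nat) (s t : n.-tuple nat) : algC :=
  permanent (scattering p s t) /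
  sqrtC ((\prod_(1 <= k < (2 ^ p).+1) (mu s k)`!)%N%:R *
         (\prod_(1 <= k < (2 ^ p).+1) (mu t k)`!)%N%:R).

Definition suppressed (p n : nat) (s t : n.-tuple nat) : Prop :=
  amplitude p s t = 0.

Definition input_state (n c : nat) : n.-tuple nat :=
  [tuple (i.+1 + n * c)%N | i < n].

Definition beta (q x : nat) : nat := (x %% 2 ^ q)%N.

Definition xor_beta (q : nat) (t : seq nat) : nat :=
  foldr PeanoNat.Nat.lxor 0%N [seq beta q x.-1 | x <- t].

(* Main.v *)
Require Import Defs.
From Stdlib Require Import PeanoNat.
From HB Require Import structures.
From mathcomp Require Import all_boot all_order all_algebra all_fingroup all_field.
From mathcomp Require Import zify ring lra.
Set Implicit Arguments. Unset Strict Implicit. Unset Printing Implicit Defensive.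
Import Order.TTheory GRing.Theory Num.Theory.

Lemma div2_half n : Nat.div2 n = n./2 /\ Nat.odd n = odd n.
Proof.
have : (Nat.div2 n = n./2 /\ Nat.odd n = odd n) /\ (Nat.div2 n.+1 = n.+1./2 /\ Nat.odd n.+1 = odd n.+1).
  elim: n => [|n [[IH1 IH2] [IH3 IH4]]]; first by split.
  split; first by split.
  split.
    by rewrite [LHS]/= IH1.
  by rewrite [LHS]Nat.odd_succ Nat.even_succ IH2 /=; case: (odd n).
by case.
Qed.

Lemma lxor_rec a b : Nat.lxor a b = (odd a (+) odd b) + (Nat.lxor a./2 b./2).*2.
Proof.
apply: Nat.bits_inj => n; case: n => [|n].
  rewrite Nat.lxor_spec !Nat.bit0_odd !(proj2 (div2_half _)).
  by rewrite oddD odd_double addbF; case: (odd a); case: (odd b).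
rewrite Nat.lxor_spec -!Nat.testbit_div2 !(proj1 (div2_half _)) half_bit_double.
by rewrite Nat.lxor_spec.
Qed.

Lemma half_lt q a : a < 2 ^ q.+1 -> a./2 < 2 ^ q.
Proof. move=> ha; have := odd_double_half a; rewrite expnS in ha.
move: (odd a) (a./2) => [] x; lia. Qed.

Lemma lxor_lt q a b : a < 2 ^ q -> b < 2 ^ q -> Nat.lxor a b < 2 ^ q.
Proof.
elim: q a b => [|q IH] a b.
  by rewrite expn0 !ltnS !leqn0 => /eqP-> /eqP->.
move=> ha hb; rewrite lxor_rec.
have := IH _ _ (half_lt ha) (half_lt hb).
move: (Nat.lxor _ _) => x; rewrite expnS; case: (_ (+) _) => /=; lia.
Qed.

Lemma lxor_top q (e f : bool) a b : a < 2 ^ q -> b < 2 ^ q ->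
  Nat.lxor (e * 2 ^ q + a) (f * 2 ^ q + b) = (e (+) f) * 2 ^ q + Nat.lxor a b.
Proof.
elim: q a b => [|q IH] a b.
  rewrite expn0 !ltnS !leqn0 => /eqP-> /eqP->.
  by case: e; case: f.
move=> ha hb; rewrite lxor_rec [in RHS]lxor_rec.
have oe (g : bool) x : odd (g * 2 ^ q.+1 + x) = odd x.
  by rewrite oddD oddM oddX andbF.
have he (g : bool) x : (g * 2 ^ q.+1 + x)./2 = g * 2 ^ q + x./2.
  have -> : g * 2 ^ q.+1 = (g * 2 ^ q).*2 by rewrite expnS -mul2n mulnCA.
  by rewrite halfD odd_double /= doubleK.
rewrite !oe !he IH ?(half_lt ha) ?(half_lt hb) // doubleD addnCA.
by rewrite expnS mulnCA mul2n.
Qed.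

Lemma top_decomp q y : y < 2 ^ q.+1 -> y = (2 ^ q <= y) * 2 ^ q + y %% 2 ^ q.
Proof.
move=> hy; case: leqP => h.
  have h2 : y - 2 ^ q < 2 ^ q by rewrite expnS in hy; lia.
  by rewrite mul1n -{2}(subnK h) modnDr modn_small // subnKC.
by rewrite mul0n add0n modn_small.
Qed.

Lemma sylv0_S q (e f : bool) a b : a < 2 ^ q -> b < 2 ^ q ->
  sylv0 q.+1 (e * 2 ^ q + a) (f * 2 ^ q + b) = (sylv0 q a b * (if e && f then -1 else 1))%R.
Proof.
move=> ha hb /=.
have hx x : (2 ^ q + x < 2 ^ q) = false by rewrite ltnNge leq_addr.
case: e; case: f; rewrite ?mul1n ?mul0n ?add0n /= ?ha ?hb ?hx ?addKn ?mulr1 ?mulrN1 //.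
Qed.

Lemma decomp q y : y < 2 ^ q.+1 -> exists (e : bool) a, a < 2 ^ q /\ y = e * 2 ^ q + a.
Proof.
move=> hy; exists (2 ^ q <= y), (y %% 2 ^ q); split; first by rewrite ltn_pmod ?expn_gt0.
exact: top_decomp.
Qed.

Lemma sylv0_mulx q a b c : a < 2 ^ q -> b < 2 ^ q -> c < 2 ^ q ->
  sylv0 q (Nat.lxor a b) c = (sylv0 q a c * sylv0 q b c)%R.
Proof.
elim: q a b c => [|q IH] a b c.
  by rewrite expn0 !ltnS !leqn0 => /eqP-> /eqP-> /eqP->.
move=> /decomp [e [a' [ha ->]]] /decomp [f [b' [hb ->]]] /decomp [g [c' [hc ->]]].
rewrite lxor_top // !sylv0_S ?lxor_lt // IH //.
by case: e; case: f; case: g => /=; rewrite ?mulr1 ?mulrN1 ?mulNr ?mulrN ?opprK.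
Qed.

Lemma sylv0_sym q a b : a < 2 ^ q -> b < 2 ^ q -> sylv0 q a b = sylv0 q b a.
Proof.
elim: q a b => [|q IH] a b; first by [].
move=> /decomp [e [a' [ha ->]]] /decomp [f [b' [hb ->]]].
by rewrite !sylv0_S // IH // andbC.
Qed.

Lemma sylv0_mulx2 q a b c : a < 2 ^ q -> b < 2 ^ q -> c < 2 ^ q ->
  sylv0 q c (Nat.lxor a b) = (sylv0 q c a * sylv0 q c b)%R.
Proof.
move=> ha hb hc; rewrite sylv0_sym ?lxor_lt // sylv0_mulx //.
by rewrite (sylv0_sym ha) // (sylv0_sym hb).
Qed.

Lemma sylv0_pm q a b : sylv0 q a b = 1%R \/ sylv0 q a b = (-1)%R.
Proof.
elim: q a b => [|q IH] a b /=; first by left.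
case: ifP => _; case: ifP => _ //.
by case: (IH (a - 2 ^ q) (b - 2 ^ q)) => ->; [right|left]; rewrite ?opprK.
Qed.

Lemma sylv0_0 q b : sylv0 q 0 b = 1%R.
Proof.
elim: q b => [|q IH] b //=.
by rewrite expn_gt0 /=; case: ifP.
Qed.

Lemma sylv0_neg q X : X != 0 -> X < 2 ^ q -> exists2 a, a < 2 ^ q & sylv0 q X a = (-1)%R.
Proof.
elim: q X => [|q IH] X.
  by rewrite expn0 ltnS leqn0 => /negbTE->.
move=> hX /decomp [e [X' [hX' eX]]].
have hh : 2 ^ q < 2 ^ q.+1 by rewrite ltn_exp2l.
have hh2 x : x < 2 ^ q -> x < 2 ^ q.+1 by move=> h; apply: ltn_trans hh.
case: (eqVneq X' 0) => [X0|nX].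
  exists (true * 2 ^ q + 0); first by rewrite mul1n addn0.
  move: hX; rewrite eX X0 addn0; clear eX; case: e => //= _.
  by have := @sylv0_S q true true 0 0 (expn_gt0 2 q) (expn_gt0 2 q); rewrite !addn0 sylv0_0 mul1r /=; rewrite mul1n.
have [a ha ea] := IH _ nX hX'.
exists (false * 2 ^ q + a); first by rewrite mul0n add0n hh2.
by rewrite eX sylv0_S // ea andbF mulr1.
Qed.

Lemma sylv0_tensor k q a b c d : a < 2 ^ k -> c < 2 ^ k -> b < 2 ^ q -> d < 2 ^ q ->
  sylv0 (k + q) (a * 2 ^ q + b) (c * 2 ^ q + d) = (sylv0 k a c * sylv0 q b d)%R.
Proof.
elim: k a c => [|k IH] a c.
  by rewrite expn0 !ltnS !leqn0 => /eqP-> /eqP-> hb hd; rewrite !mul0n !add0n /= mul1r.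
move=> /decomp [e [a' [ha ->]]] /decomp [f [c' [hc ->]]] hb hd.
have lt x y : x < 2 ^ k -> y < 2 ^ q -> x * 2 ^ q + y < 2 ^ (k + q).
  move=> hx hy; rewrite expnD; apply: leq_trans (_ : x.+1 * 2 ^ q <= _).
    by rewrite mulSn; move: (x * 2 ^ q) => z; lia.
  by rewrite leq_mul2r hx orbT.
rewrite addSn !mulnDl -!mulnA -!expnD -!addnA !sylv0_S ?lt // IH //.
by rewrite mulrAC.
Qed.


Definition blockok (J : finType) (cl : J -> bool) (S : {set J}) : bool :=
  (#|S| == 2) && [forall j in S, forall j' in S, cl j == cl j'].

Definition CMg (J : finType) (U : {set J}) (cl : J -> bool) : {set {set {set J}}} :=
  [set mu | partition mu U && [forall S in mu, blockok cl S]].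

Lemma odd_sum_odd (I : finType) (A : {pred I}) (f : I -> nat) :
  (forall i, i \in A -> odd (f i)) -> odd (\sum_(i in A) f i) = odd #|A|.
Proof.
move=> h; rewrite -sum1_card.
apply: (big_rec2 (fun a b => odd a = odd b)) => // i a b /h oi e.
by rewrite !oddD e oi.
Qed.

Lemma partition0 (J : finType) (mu : {set {set J}}) : partition mu set0 -> mu = set0.
Proof.
move=> /and3P [/eqP hc _ h0]; apply/setP => S; rewrite inE.
apply/negbTE/negP => hS.
have : S \subset cover mu by apply: bigcup_sup.
rewrite hc subset0 => /eqP e; by move: h0; rewrite -e hS.
Qed.

Lemma two_set (J : finType) (S : {set J}) x : #|S| = 2 -> x \in S ->
  exists2 p, p != x & S = [set x; p].
Proof.
move=> hS hx; have : #|S :\ x| = 1 by rewrite (cardsD1 x S) hx in hS; case: hS.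
move=> /eqP /cards1P [p hp]; exists p.
  by have := set11 p; rewrite -hp !inE => /andP [].
apply/setP => j; rewrite !inE; case: (eqVneq j x) => [->//|nj].
have := congr1 (fun A : {set J} => j \in A) hp; rewrite /= !inE nj /= => ->.
by [].
Qed.

Lemma pick_pair (J : finType) (x p : J) : p != x ->
  odflt x [pick z in [set x; p] :\ x] = p.
Proof.
move=> np; case: pickP => [z|/(_ p)]; rewrite !inE ?np ?eqxx ?orbT //=.
by case/andP => nz /orP [/eqP e|/eqP ->//]; rewrite e eqxx in nz.
Qed.

Section Odd.
Variables (J : finType) (cl : J -> bool).

Lemma CMg_pblock (U : {set J}) x mu : x \in U -> mu \in CMg U cl ->
  exists2 p, (p \in U) && (p != x) && (cl p == cl x) &
    pblock mu x = [set x; p] /\ odflt x [pick z in pblock mu x :\ x] = p.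
Proof.
move=> hx; rewrite inE => /andP [hP /forall_inP hB].
have hc : cover mu = U by apply: cover_partition.
have hxc : x \in cover mu by rewrite hc.
have hBm := pblock_mem hxc; have := hB _ hBm; case/andP => /eqP h2 /forall_inP hcl.
have hxB : x \in pblock mu x by rewrite mem_pblock.
have [p np ep] := two_set h2 hxB.
exists p; last by split => //; rewrite ep pick_pair.
have hpB : p \in pblock mu x by rewrite ep !inE eqxx orbT.
rewrite np andbT; apply/andP; split.
  by rewrite -hc; apply/bigcupP; exists (pblock mu x).
by have := hcl _ hpB => /forall_inP /(_ x); rewrite mem_pblock hxc => /(_ isT).
Qed.

Lemma card_sepU (A B : {set J}) (P : pred J) : [disjoint A & B] ->
  #|[set j in A :|: B | P j]| = (#|[set j in A | P j]| + #|[set j in B | P j]|)%N.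
Proof.
move=> hd.
have -> : [set j in A :|: B | P j] = [set j in A | P j] :|: [set j in B | P j].
  by apply/setP => j; rewrite !inE andb_orl.
rewrite cardsU; have -> : [set j in A | P j] :&: [set j in B | P j] = set0.
  apply/setP => j; rewrite !inE; apply/negbTE; apply/negP => /andP [/andP [hA _] /andP [hB _]].
  by move: hd; rewrite -setI_eq0 => /eqP /setP /(_ j); rewrite !inE hA hB.
by rewrite cards0 subn0.
Qed.

Lemma CMg_odd : forall U : {set J},
  ~~ odd #|U| -> ~~ odd #|[set j in U | cl j]| -> odd #|CMg U cl|.
Proof.
move=> U; have [n] := ubnP #|U|; elim: n U => // n IH U hn hU hC.
case: (set_0Vmem U) => [->|[x hx]].
  have -> : CMg set0 cl = [set set0].
    apply/setP => mu; rewrite !inE; apply/andP/eqP.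
      by move=> [/partition0].
    move=> ->; split; last by apply/forall_inP => S; rewrite inE.
    apply/and3P; split => //.
      by rewrite /cover big_set0.
      by apply/trivIsetP => A B; rewrite inE.
    by rewrite inE.
  by rewrite cards1.
set D := [set p in U :\ x | cl p == cl x].
set part := fun mu : {set {set J}} => odflt x [pick p in pblock mu x :\ x].
have -> : #|CMg U cl| = \sum_(p in D) #|[set mu in CMg U cl | part mu == p]|.
  rewrite -sum1_card (partition_big part (mem D)) /=; last first.
    move=> mu hmu; have [p hp [_ e]] := CMg_pblock hx hmu.
    rewrite /part e !inE; case/andP: hp => /andP [-> ->] ->; by rewrite !andbT.
  apply: eq_bigr => p _; rewrite -sum1_card; apply: eq_bigl => mu; by rewrite inE.
rewrite odd_sum_odd.
  set E := [set j in U | cl j == cl x].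
  have hD : D = E :\ x by apply/setP => j; rewrite !inE andbA.
  have hxE : x \in E by rewrite inE hx eqxx.
  have hE : ~~ odd #|E|.
    set C := [set j in U | cl j].
    case cx : (cl x).
      have -> : E = C by apply/setP => j; rewrite !inE cx eqb_id.
      exact: hC.
    have -> : E = U :\: C by apply/setP => j; rewrite !inE cx; case: (cl j); case: (j \in U).
    have := cardsID C U; have -> : U :&: C = C by apply/setP => j; rewrite !inE; case: (j \in U); case: (cl j).
    move=> e; move: hU hC; rewrite -e oddD; case: (odd #|C|); case: (odd _) => //.
  move: hE; rewrite (cardsD1 x E) hxE -hD /=; by case: (odd #|D|).
move=> p; rewrite !inE => /andP [/andP [npx hpU] hcp].
set A := [set x; p].
have hAU : A \subset U by apply/subsetP => j; rewrite !inE => /orP [] /eqP ->.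
have hxA : x \in A by rewrite !inE eqxx.
have hA2 : #|A| = 2 by rewrite cards2 eq_sym npx.
have hAok : blockok cl A.
  rewrite /blockok hA2 eqxx /=; apply/forall_inP => j hj; apply/forall_inP => j' hj'.
  by move: hj hj'; rewrite !inE => /orP [] /eqP -> /orP [] /eqP ->; rewrite ?eqxx // eq_sym.
set U' := U :\: A.
have hU' : U = A :|: U'.
  apply/eqP; rewrite eqEsubset subUset hAU /U' subsetDl /= andbT; apply/subsetP => j hj.
  by rewrite in_setU in_setD hj andbT orbN.
have notin nu : nu \in CMg U' cl -> A \notin nu.
  rewrite inE => /andP [/and3P [/eqP hc _ _] _]; apply/negP => hAn.
  have : x \in cover nu by apply/bigcupP; exists A.
  by rewrite hc /U' in_setD hxA.
have -> : [set mu in CMg U cl | part mu == p] = [set A |: nu | nu in CMg U' cl].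
  apply/setP => mu; apply/idP/idP.
    rewrite inE => /andP [hmu /eqP hpart].
    have [p' _ [eB ep']] := CMg_pblock hx hmu.
    have pp : p' = p by rewrite -ep' -hpart.
    move: eB; rewrite pp -/A => eB.
    move: (hmu); rewrite inE => /andP [hP /forall_inP hB].
    have hAmu : A \in mu by rewrite -eB pblock_mem // (cover_partition hP).
    apply/imsetP; exists (mu :\ A); last by rewrite setD1K.
    rewrite inE; apply/andP; split.
      case/and3P: hP => /eqP hc ht h0; apply/and3P; split.
      - by rewrite coverD1 // hc.
      - by apply: trivIsetS ht; apply: subD1set.
      - by rewrite !inE negb_and h0 orbT.
    by apply/forall_inP => S; rewrite !inE => /andP [_ /hB].
  case/imsetP => nu hnu ->.
  have hnA := notin _ hnu.
  have : partition nu U' && [forall S in nu, blockok cl S] by rewrite inE in hnu.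
  move=> /andP [hP' /forall_inP hB].
  case/and3P: hP' => /eqP hc ht h0.
  have hdis : {in nu, forall B : {set J}, [disjoint A & B]}.
    move=> B hB'; rewrite -setI_eq0; apply/eqP/setP => j; rewrite !inE.
    apply/negP => /andP [hjA hjB].
    have : j \in cover nu by apply/bigcupP; exists B.
    by rewrite hc !inE hjA.
  have [htA _] := trivIsetU1 hdis ht h0.
  have hmem : A |: nu \in CMg U cl.
    rewrite inE; apply/andP; split.
      apply/and3P; split => //.
        by rewrite /cover big_setU1 //= -/(cover nu) hc -hU'.
      rewrite !inE negb_or h0 andbT; apply/eqP => e; by rewrite -e inE in hxA.
    apply/forall_inP => S; rewrite !inE => /orP [/eqP ->//|]; exact: hB.
  rewrite inE hmem /= /part.
  have -> : pblock (A |: nu) x = A by apply: def_pblock => //; rewrite !inE eqxx.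
  by rewrite pick_pair.
rewrite card_in_imset; last first.
  move=> nu1 nu2 h1 h2 e; by rewrite -(setU1K (notin _ h1)) e setU1K // notin.
have hdisA : [disjoint A & U'] by rewrite -setI_eq0; apply/eqP/setP => j; rewrite /U' in_setI in_setD in_set0; case: (j \in A).
have hcU : #|U| = (#|U'| + 2)%N.
  rewrite {1}hU' cardsU; move: (hdisA); rewrite -setI_eq0 => /eqP ->; rewrite cards0 hA2; lia.
have hcC : ~~ odd #|[set j in U | cl j]| = ~~ odd #|[set j in U' | cl j]|.
  rewrite hU' card_sepU //.
  have -> : [set j in A | cl j] = if cl x then A else set0.
    apply/setP => j; rewrite !inE; case: (eqVneq j x) => [->|nx] /=; first by case: (cl x); rewrite ?inE ?eqxx.
    case: (eqVneq j p) => [->|np] /=; first by rewrite (eqP hcp); case: (cl x); rewrite ?inE ?eqxx ?orbT.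
    by case: (cl x); rewrite ?inE ?(negbTE nx) ?(negbTE np).
  by case: (cl x); rewrite ?hA2 ?cards0 // oddD.
apply: IH.
- by rewrite hcU in hn; lia.
- by move: hU; rewrite hcU oddD addbF.
- by rewrite -hcC.
Qed.
End Odd.


Lemma lxorA : associative Nat.lxor.
Proof. by move=> a b c; rewrite Nat.lxor_assoc. Qed.
HB.instance Definition _ := Monoid.isComLaw.Build nat 0%N Nat.lxor
  lxorA Nat.lxor_comm Nat.lxor_0_l.

Local Open Scope ring_scope.

Definition bijon (C J : finType) (U : {set J}) (f : {ffun C -> J}) : bool :=
  injectiveb f && [forall c, f c \in U].

Definition PSg (C J : finType) (U : {set J}) (w : J -> C -> int) : int :=
  \sum_(f : {ffun C -> J} | bijon U f) \prod_c w (f c) c.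

Definition PS (q : nat) (J : finType) (U : {set J}) (y : J -> nat) : int :=
  PSg U (fun j (c : 'I_(2 ^ q)) => sylv0 q (y j) c).

Lemma PSg_reindex (C C' J : finType) (U : {set J}) (w : J -> C -> int)
  (phi : C' -> C) (psi : C -> C') :
  cancel phi psi -> cancel psi phi ->
  PSg U w = PSg U (fun j c' => w j (phi c')).
Proof.
move=> K1 K2; rewrite /PSg.
rewrite (reindex (fun g : {ffun C' -> J} => [ffun c => g (psi c)])); last first.
  exists (fun f : {ffun C -> J} => [ffun c' => f (phi c')]) => g _.
    by apply/ffunP => c'; rewrite !ffunE K1.
  by apply/ffunP => c; rewrite !ffunE K2.
apply: eq_big => g.
  rewrite /bijon; congr andb.
    apply/injectiveP/injectiveP => hi x y.
      move=> e; apply: (can_inj K1); apply: hi; by rewrite !ffunE !K1.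
    by rewrite !ffunE => /hi /(can_inj K2).
  apply/forallP/forallP => h x.
    by have := h (phi x); rewrite ffunE K1.
  by rewrite ffunE.
move=> _; rewrite (reindex phi); last by exists psi => ? _.
by apply: eq_bigr => c' _; rewrite ffunE K1.
Qed.

Definition oddz (z : int) := exists k : int, z = 2 * k + 1.

Lemma PS_base (J : finType) (U : {set J}) (y : J -> nat) :
  #|U| = 1%N -> PS 0 U y = 1.
Proof.
move=> /eqP /cards1P [j0 ->]; rewrite /PS /PSg.
rewrite (eq_bigr (fun _ => 1)); last by move=> f _; apply: big1.
rewrite sumr_const.
set A := (fun _ => _).
have -> : #|A| = 1%N; last by [].
rewrite -cardsE; apply/eqP/cards1P; exists [ffun => j0].
apply/setP => f; rewrite !inE /A.
apply/andP/eqP.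
  move=> [_ /forallP h]; apply/ffunP => c; rewrite ffunE.
  by apply/set1P; apply: h.
move=> ->; split.
  by apply/injectiveP => a b _; apply: val_inj; case: a b => [[]//] ? [[]//].
by apply/forallP => c; rewrite ffunE set11.
Qed.

Local Open Scope ring_scope.

Lemma ltX q (x : 'I_(2 ^ q) * bool) : (x.2 * 2 ^ q + x.1 < 2 ^ q.+1)%N.
Proof. case: x => [c []] /=; rewrite expnS ?mul1n ?mul0n; have := ltn_ord c; lia. Qed.

Definition phiX q (x : 'I_(2 ^ q) * bool) : 'I_(2 ^ q.+1) := Ordinal (ltX x).
Definition psiX q (c : 'I_(2 ^ q.+1)) : 'I_(2 ^ q) * bool :=
  (Ordinal (ltn_pmod c (expn_gt0 2 q)), (2 ^ q <= c)%N).

Lemma phiXK q : cancel (@phiX q) (@psiX q).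
Proof.
move=> [c e]; rewrite /phiX /psiX /=; congr pair.
  by apply: val_inj => /=; rewrite modnMDl modn_small.
by case: e; rewrite ?mul1n ?mul0n ?leq_addr // add0n leqNgt ltn_ord.
Qed.

Lemma psiXK q : cancel (@psiX q) (@phiX q).
Proof. by move=> c; apply: val_inj => /=; rewrite -top_decomp. Qed.

Lemma PS_S q (J : finType) (U : {set J}) (y : J -> nat) :
  PS q.+1 U y = PSg U (fun j (x : 'I_(2 ^ q) * bool) => sylv0 q.+1 (y j) (x.2 * 2 ^ q + x.1)).
Proof. by rewrite /PS (PSg_reindex _ _ (@phiXK q) (@psiXK q)). Qed.

Section Avg.
Variables (h : nat) (J : finType) (U : {set J}).

Definition swp (b : {ffun 'I_h -> bool}) (g : {ffun 'I_h * bool -> J}) : {ffun 'I_h * bool -> J} :=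
  [ffun x => g (x.1, x.2 (+) b x.1)].

Lemma swpK b : involutive (swp b).
Proof. by move=> g; apply/ffunP => [[c e]]; rewrite !ffunE /= addbK. Qed.

Lemma bijon_swp b g : bijon U (swp b g) = bijon U g.
Proof.
rewrite /bijon; congr andb.
  apply/injectiveP/injectiveP => hi.
    move=> [c e] [c' e'] ee.
    have := hi (c, e (+) b c) (c', e' (+) b c'); rewrite !ffunE /= !addbK => /(_ ee).
    by case=> ec; move: ee; rewrite ec => _ /addIb ->.
  move=> [c e] [c' e']; rewrite !ffunE /= => /hi [ec].
  by rewrite ec => /addIb ->.
apply/forallP/forallP => hh x.
  by have := hh (x.1, x.2 (+) b x.1); rewrite ffunE /= addbK -surjective_pairing.
by rewrite ffunE.
Qed.

Lemma avg (w : J -> 'I_h * bool -> int) :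
  (2 ^ h)%:R * PSg U w =
  \sum_(g : {ffun 'I_h * bool -> J} | bijon U g)
    \prod_c (w (g (c, true)) (c, true) * w (g (c, false)) (c, false) +
             w (g (c, false)) (c, true) * w (g (c, true)) (c, false)).
Proof.
have -> : (2 ^ h)%:R * PSg U w = \sum_(b : {ffun 'I_h -> bool}) PSg U w.
  by rewrite sumr_const card_ffun card_bool card_ord mulr_natl.
have e b : PSg U w = \sum_(g : {ffun 'I_h * bool -> J} | bijon U g) \prod_x w (swp b g x) x.
  rewrite /PSg (reindex_inj (inv_inj (swpK b))).
  by apply: eq_bigl => g; rewrite bijon_swp.
rewrite (eq_bigr _ (fun b _ => e b)) exchange_big /=.
apply: eq_bigr => g _.
rewrite (eq_bigr (fun b : {ffun 'I_h -> bool} => \prod_c (w (g (c, ~~ b c)) (c, true) * w (g (c, b c)) (c, false)))); last first.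
  move=> b _.
  rewrite (eq_bigr (fun x => (fun c e => w (swp b g (c, e)) (c, e)) x.1 x.2)); last by move=> [c e'].
  rewrite -(pair_bigA _ (fun c e => w (swp b g (c, e)) (c, e))).
  apply: eq_bigr => c _; rewrite big_bool !ffunE /=.
  by [].
rewrite -(bigA_distr_bigA (fun c (bb : bool) => w (g (c, ~~ bb)) (c, true) * w (g (c, bb)) (c, false))).
apply: eq_bigr => c _; rewrite big_bool /=.
by rewrite addrC.
Qed.

End Avg.

Lemma pairsum q (ya yb : nat) (c : nat) : (ya < 2 ^ q.+1)%N -> (yb < 2 ^ q.+1)%N -> (c < 2 ^ q)%N ->
  sylv0 q.+1 ya (true * 2 ^ q + c) * sylv0 q.+1 yb (false * 2 ^ q + c) +
  sylv0 q.+1 yb (true * 2 ^ q + c) * sylv0 q.+1 ya (false * 2 ^ q + c) =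
  sylv0 q (Nat.lxor (ya %% 2 ^ q) (yb %% 2 ^ q)) c *
    ((if (2 ^ q <= ya)%N then -1 else 1) + (if (2 ^ q <= yb)%N then -1 else 1)).
Proof.
move=> /decomp [ea [a [ha ->]]] /decomp [eb [b [hb ->]]] hc.
rewrite !modnMDl !modn_small // !sylv0_S // sylv0_mulx //.
have t (e : bool) x : (x < 2 ^ q)%N -> (2 ^ q <= e * 2 ^ q + x)%N = e.
  by case: e => hx; rewrite ?mul1n ?leq_addr // mul0n add0n leqNgt hx.
rewrite !t //.
by case: ea; case: eb => /=; rewrite ?mulr1 ?mulrN1 ?mulNr ?mulrN ?opprK; ring.
Qed.

Lemma set2_eq (J : finType) (a b a' b' : J) : [set a; b] = [set a'; b'] -> a != b ->
  (a = a' /\ b = b') \/ (a = b' /\ b = a').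
Proof.
move=> e nab.
have ha : a \in [set a'; b'] by rewrite -e !inE eqxx.
have hb : b \in [set a'; b'] by rewrite -e !inE eqxx orbT.
move: ha hb; rewrite !inE => /orP [] /eqP ea /orP [] /eqP eb.
- by move: nab; rewrite ea eb eqxx.
- by left.
- by right.
- by move: nab; rewrite ea eb eqxx.
Qed.

Section Fiber.
Variables (h : nat) (J : finType) (U : {set J}).

Definition Phi (g : {ffun 'I_h * bool -> J}) : {ffun 'I_h -> {set J}} :=
  [ffun c => [set g (c, true); g (c, false)]].

Definition validT (T : {ffun 'I_h -> {set J}}) : bool :=
  [exists g, bijon U g && (Phi g == T)].

Lemma fiber_card g0 : bijon U g0 ->
  #|[set g | bijon U g && (Phi g == Phi g0)]| = (2 ^ h)%N.
Proof.
move=> hg0; have inj0 : injective g0 by move: hg0 => /andP [/injectiveP].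
have -> : [set g | bijon U g && (Phi g == Phi g0)] = [set swp b g0 | b in {ffun 'I_h -> bool}].
  apply/setP => g; rewrite inE; apply/andP/imsetP.
    move=> [hg /eqP e]; have injg : injective g by move: hg => /andP [/injectiveP].
    exists [ffun c => g (c, false) != g0 (c, false)] => //.
    apply/ffunP => [[c ee]]; rewrite !ffunE /=.
    have := congr1 (fun f : {ffun 'I_h -> {set J}} => f c) e; rewrite !ffunE => /set2_eq.
    have nab : g (c, true) != g (c, false) by apply/eqP => /injg [].
    case/(_ nab) => [[e1 e2]|[e1 e2]].
      by rewrite e2 eqxx; case: ee; rewrite /= ?e1 ?e2.
    rewrite [in X in _ (+) X]e2.
    have -> : (g0 (c, true) != g0 (c, false)) = true by apply/eqP => /inj0 [].
    by case: ee; rewrite /= ?e1 ?e2.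
  case=> b _ ->; split; first by rewrite bijon_swp.
  apply/eqP/ffunP => c; rewrite !ffunE /=; case: (b c) => //=.
  by rewrite setUC.
rewrite card_imset ?card_ffun ?card_bool ?card_ord //.
move=> b b' e; apply/ffunP => c.
have := congr1 (fun f : {ffun 'I_h * bool -> J} => f (c, false)) e; rewrite !ffunE /= => /inj0 [].
by [].
Qed.

Lemma fiber_sum (H : {ffun 'I_h -> {set J}} -> int) :
  \sum_(g : {ffun 'I_h * bool -> J} | bijon U g) H (Phi g) =
  (2 ^ h)%:R * \sum_(T | validT T) H T.
Proof.
rewrite (partition_big Phi validT) /=; last first.
  by move=> g hg; apply/existsP; exists g; rewrite hg eqxx.
rewrite mulr_sumr; apply: eq_bigr => T /existsP [g0 /andP [hg0 /eqP <-]].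
rewrite (eq_bigr (fun _ => H (Phi g0))); last by move=> g /andP [_ /eqP ->].
rewrite sumr_const mulr_natl; congr (_ *+ _).
by rewrite -(fiber_card hg0) cardsE.
Qed.

End Fiber.

Section Match.
Variables (h : nat) (J : finType) (U : {set J}) (cl : J -> bool).
Hypothesis hU2 : #|U| = (h + h)%N.

Definition compatT (T : {ffun 'I_h -> {set J}}) := [forall c, blockok cl (T c)].
Definition imT (T : {ffun 'I_h -> {set J}}) : {set {set J}} := [set T c | c in 'I_h].

Lemma bijon_inj (C K : finType) (V : {set K}) (g : {ffun C -> K}) : bijon V g -> injective g.
Proof. by case/andP => /injectiveP. Qed.

Lemma bijon_in (C K : finType) (V : {set K}) (g : {ffun C -> K}) x : bijon V g -> g x \in V.
Proof. by case/andP => _ /forallP. Qed.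

Lemma bijon_onto (g : {ffun 'I_h * bool -> J}) : bijon U g -> [set g x | x : ('I_h * bool)%type] = U.
Proof.
move=> hg; apply/eqP; rewrite eqEcard; apply/andP; split.
  by apply/subsetP => j /imsetP [x _ ->]; apply: bijon_in.
rewrite card_imset; last exact: bijon_inj hg.
by rewrite card_prod card_ord card_bool hU2; lia.
Qed.

Lemma valid_im T : validT U T -> compatT T -> imT T \in CMg U cl.
Proof.
case/existsP => g /andP [hg /eqP eT] /forallP hc.
have injg := bijon_inj hg.
have [hpart _] : partition (imT T) (cover (imT T)) /\ {in 'I_h &, injective T}.
  apply: indexed_partition.
    move=> i j _ _ nji; rewrite -setI_eq0; apply/eqP/setP => v; rewrite !inE -eT !ffunE !inE.
    apply/negbTE/negP => /andP [/orP [] /eqP -> /orP [] /eqP /injg []] e; by rewrite e eqxx in nji.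
  by move=> i _; rewrite -eT ffunE; apply/set0Pn; exists (g (i, true)); rewrite !inE eqxx.
have hcov : cover (imT T) = U.
  apply/eqP; rewrite eqEsubset; apply/andP; split.
    apply/subsetP => v /bigcupP [S /imsetP [c _ ->]]; rewrite -eT ffunE !inE.
    by case/orP => /eqP ->; apply: bijon_in.
  rewrite -(bijon_onto hg); apply/subsetP => v /imsetP [[c e] _ ->].
  apply/bigcupP; exists (T c); first by apply/imsetP; exists c.
  by rewrite -eT ffunE !inE; case: e; rewrite eqxx ?orbT.
rewrite inE; apply/andP; split; first by rewrite -[X in partition _ X]hcov.
apply/forall_inP => S /imsetP [c _ ->]; exact: hc.
Qed.

Lemma CM_card mu : mu \in CMg U cl -> #|mu| = h.
Proof.
rewrite inE => /andP [hp /forall_inP hb].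
have := card_partition hp; rewrite hU2.
rewrite (eq_bigr (fun _ => 2%N)); last by move=> S /hb /andP [/eqP].
by rewrite sum_nat_const; lia.
Qed.

Lemma valid_bijon mu T : validT U T -> imT T == mu -> bijon mu T.
Proof.
case/existsP => g /andP [hg /eqP eT] /eqP <-.
have injg := bijon_inj hg.
apply/andP; split; last by apply/forallP => c; apply/imsetP; exists c.
apply/injectiveP => c c'; rewrite -eT !ffunE => e.
have : g (c, true) \in [set g (c', true); g (c', false)] by rewrite -e !inE eqxx.
by rewrite !inE => /orP [] /eqP /injg [].
Qed.

Variable j0 : J.
Definition fstS (S : {set J}) := odflt j0 [pick j in S].
Definition sndS (S : {set J}) := odflt j0 [pick j in S :\ fstS S].

Lemma fst_snd (S : {set J}) : #|S| = 2 -> [/\ fstS S \in S, sndS S \in S, sndS S != fstS S &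
  [set fstS S; sndS S] = S].
Proof.
move=> h2.
have h1 : fstS S \in S.
  rewrite /fstS; case: pickP => [//|/(_ _) hn]; move: h2.
  by rewrite (eq_card0 hn).
have h3 : sndS S \in S :\ fstS S.
  rewrite /sndS; case: pickP => [//|/(_ _) hn]; move: h2.
  by rewrite (cardsD1 (fstS S)) h1 (eq_card0 hn).
move: h3; rewrite !inE => /andP [nsf hs]; split => //.
apply/eqP; rewrite eqEcard h2 cards2 eq_sym nsf andbT.
by apply/subsetP => v; rewrite !inE => /orP [] /eqP ->.
Qed.

Lemma bijon_valid mu T : mu \in CMg U cl -> bijon mu T ->
  [&& validT U T, compatT T & imT T == mu].
Proof.
move=> hmu hT; have injT := bijon_inj hT.
move: (hmu); rewrite inE => /andP [hp /forall_inP hb].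
case/and3P: (hp) => /eqP hcov htriv h0.
have hTc c : blockok cl (T c) by apply: hb; apply: bijon_in hT.
apply/and3P; split.
- apply/existsP; exists [ffun x => if x.2 then fstS (T x.1) else sndS (T x.1)].
  apply/andP; split; last first.
    apply/eqP/ffunP => c; rewrite !ffunE /=.
    by have [_ _ _ ->] := fst_snd (eqP (proj1 (andP (hTc c)))).
  apply/andP; split.
    apply/injectiveP => [[c e] [c' e']]; rewrite !ffunE /=.
    have [f1 s1 ns1 _] := fst_snd (eqP (proj1 (andP (hTc c)))).
    have [f2 s2 ns2 _] := fst_snd (eqP (proj1 (andP (hTc c')))).
    move=> ev.
    have ecc : c = c'.
      apply: injT; apply/eqP; apply/negPn/negP => nT.
      have := trivIsetP htriv _ _ (bijon_in c hT) (bijon_in c' hT) nT.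
      rewrite -setI_eq0 => /eqP /setP /(_ (if e then fstS (T c) else sndS (T c))).
      have hin1 : (if e then fstS (T c) else sndS (T c)) \in T c by case: (e).
      have hin2 : (if e then fstS (T c) else sndS (T c)) \in T c' by rewrite ev; case: (e').
      by rewrite !inE hin1 hin2.
    subst c'; move: ev; case: e; case: e' => //= ev.
      by rewrite ev eqxx in ns1.
    by rewrite ev eqxx in ns1.
  apply/forallP => [[c e]]; rewrite ffunE /= -hcov.
  apply/bigcupP; exists (T c); first by apply: bijon_in hT.
  have [f1 s1 _ _] := fst_snd (eqP (proj1 (andP (hTc c)))).
  by case: e.
- by apply/forallP => c.
- rewrite eqEcard; apply/andP; split.
    by apply/subsetP => S /imsetP [c _ ->]; apply: bijon_in hT.
  by rewrite card_imset // card_ord (CM_card hmu).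
Qed.

End Match.

Local Open Scope ring_scope.

Lemma xor_modtop q (J : finType) (U : {set J}) (y : J -> nat) :
  (forall j, j \in U -> (y j < 2 ^ q.+1)%N) ->
  \big[Nat.lxor/0%N]_(j in U) y j =
  (odd #|[set j in U | (2 ^ q <= y j)%N]| * 2 ^ q + \big[Nat.lxor/0%N]_(j in U) (y j %% 2 ^ q))%N.
Proof.
move=> hy.
have -> : #|[set j in U | (2 ^ q <= y j)%N]| = (\sum_(j in U) (2 ^ q <= y j)%N)%N.
  rewrite -sum1_card (eq_bigl (fun j => (j \in U) && (2 ^ q <= y j)%N)); last by move=> j; rewrite inE.
  by rewrite big_mkcondr /=; apply: eq_bigr => j _; case: ifP.
pose K (a n z : nat) := (a = odd n * 2 ^ q + z /\ z < 2 ^ q)%N.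
suff : K (\big[Nat.lxor/0%N]_(j in U) y j) (\sum_(j in U) (2 ^ q <= y j)%N)%N
         (\big[Nat.lxor/0%N]_(j in U) (y j %% 2 ^ q)%N) by case.
apply: big_rec3; first by split; rewrite ?expn_gt0.
move=> j a n z hj [-> hz]; split; last first.
  by apply: lxor_lt => //; rewrite ltn_pmod ?expn_gt0.
have hyj := hy j hj; rewrite {1}(top_decomp hyj) lxor_top ?ltn_pmod ?expn_gt0 //.
by rewrite oddD oddb.
Qed.

Lemma xor_lt_big q (K : finType) (A : {pred K}) (f : K -> nat) :
  (forall i, i \in A -> (f i < 2 ^ q)%N) -> (\big[Nat.lxor/0%N]_(i in A) f i < 2 ^ q)%N.
Proof.
move=> h; apply: (big_ind (fun a => (a < 2 ^ q)%N)) => //; first by rewrite expn_gt0.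
by move=> a b; apply: lxor_lt.
Qed.


Lemma oddz_sum (K : finType) (A : {pred K}) (f : K -> int) :
  (forall i, i \in A -> oddz (f i)) -> odd #|A| -> oddz (\sum_(i in A) f i).
Proof.
move=> h hA.
have : exists k : int, \sum_(i in A) f i = 2 * k + (#|A|)%:R.
  rewrite -sum1_card.
  apply: (big_rec2 (fun (z : int) (n : nat) => exists k : int, z = 2 * k + n%:R)).
    by exists 0; rewrite mulr0 add0r.
  move=> i z n hi [k ->]; have [m ->] := h i hi.
  by exists (m + k); rewrite natrD; ring.
case=> k ->.
have [m hm] : exists m, #|A| = (2 * m + 1)%N.
  exists (#|A|./2); have := odd_double_half #|A|; rewrite hA; lia.
by exists (k + m%:R); rewrite hm natrD natrM; ring.
Qed.

Lemma oddz_sign (e z : int) : (e = 1 \/ e = -1) -> oddz z -> oddz (e * z).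
Proof.
case=> -> [k ->]; first by exists k; rewrite mul1r.
by exists (- k - 1); ring.
Qed.

Lemma prod_pm2 (K : finType) (A : {pred K}) (f : K -> int) :
  (forall i, i \in A -> f i = 2 \/ f i = -2) ->
  exists2 e : int, (e = 1 \/ e = -1) & \prod_(i in A) f i = 2 ^+ #|A| * e.
Proof.
move=> h; rewrite -sum1_card.
apply: (big_rec2 (fun (p : int) (n : nat) => exists2 e : int, (e = 1 \/ e = -1) & p = 2 ^+ n * e)).
  by exists 1; [left|rewrite mulr1].
move=> i p n hi [e he ->].
case: (h i hi) => ->.
  by exists e => //; rewrite exprS; ring.
exists (- e); first by case: he => ->; [right|left]; rewrite ?opprK.
by rewrite exprS; ring.
Qed.

Lemma oddz_sum_scaled (K : finType) (A : {pred K}) (f : K -> int) (c : int) :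
  (forall i, i \in A -> exists2 z, oddz z & f i = c * z) -> odd #|A| ->
  exists2 z, oddz z & \sum_(i in A) f i = c * z.
Proof.
move=> h hA.
have : exists k : int, \sum_(i in A) f i = c * (2 * k + (#|A|)%:R).
  rewrite -sum1_card.
  apply: (big_rec2 (fun (s : int) (n : nat) => exists k : int, s = c * (2 * k + n%:R))).
    by exists 0; ring.
  move=> i s n hi [k ->]; have [z [m ->] ->] := h i hi.
  by exists (m + k); rewrite natrD; ring.
case=> k ->.
have [m hm] : exists m, #|A| = (2 * m + 1)%N.
  exists (#|A|./2); have := odd_double_half #|A|; rewrite hA; lia.
by exists (2 * (k + m%:R) + 1); [exists (k + m%:R) | rewrite hm natrD natrM; ring].
Qed.

Theorem core q : forall (J : finType) (U : {set J}) (y : J -> nat),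
  #|U| = (2 ^ q)%N -> (forall j, j \in U -> (y j < 2 ^ q)%N) ->
  \big[Nat.lxor/0%N]_(j in U) y j = 0%N ->
  exists2 z, oddz z & PS q U y = 2 ^+ (2 ^ q).-1 * z.
Proof.
elim: q => [|q IH] J U y hU hy hX.
  by exists 1; [exists 0; rewrite mulr0 add0r | rewrite PS_base // expr0 mulr1].
set h := (2 ^ q)%N.
have hh : (0 < h)%N by rewrite expn_gt0.
have hU2 : #|U| = (h + h)%N by rewrite hU expnS /h; lia.
have [j0 _] : exists j0, j0 \in U.
  by apply/set0Pn; rewrite -card_gt0 hU2; lia.
set cl := fun j => (2 ^ q <= y j)%N.
set sgn := fun j => if cl j then -1 else 1 : int.
set zS := fun S : {set J} => \big[Nat.lxor/0%N]_(j in S) (y j %% 2 ^ q)%N.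
set sig := fun S : {set J} => \sum_(j in S) sgn j.
set H := fun T : {ffun 'I_h -> {set J}} => \prod_c (sylv0 q (zS (T c)) c * sig (T c)).
have E1 : PS q.+1 U y = \sum_(T | validT U T) H T.
  apply: (mulfI (x := (2 ^ h)%:R)); first by rewrite pnatr_eq0 expn_eq0.
  rewrite PS_S avg -fiber_sum; apply: eq_bigr => g hg.
  rewrite /H; apply: eq_bigr => c _; rewrite ffunE.
  set a := g (c, true); set b := g (c, false).
  have nab : a != b by apply/eqP => /(bijon_inj hg) [].
  apply: etrans; first exact: (@pairsum q (y a) (y b) c (hy _ (bijon_in _ hg)) (hy _ (bijon_in _ hg)) (ltn_ord c)).
  have nab' : a \notin [set b] by rewrite inE.
  congr (sylv0 q _ c * _).
    by rewrite /zS big_setU1 //= big_set1.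
  by rewrite /sig big_setU1 //= big_set1.
have E2 : \sum_(T | validT U T) H T = \sum_(T | validT U T && compatT cl T) H T.
  rewrite (bigID (compatT cl)) /= [X in _ + X]big1 ?addr0 //.
  move=> T /andP [hv hnc]; case/existsP: (hv) => g /andP [hg /eqP eT].
  have [c hc] : exists c, ~~ blockok cl (T c).
    by move: hnc; rewrite /compatT negb_forall => /existsP.
  rewrite /H (bigD1 c) //=.
  have -> : sig (T c) = 0; last by rewrite mulr0 mul0r.
  move: hc; rewrite -eT ffunE; set a := g (c, true); set b := g (c, false).
  have nab : a != b by apply/eqP => /(bijon_inj hg) [].
  have nab' : a \notin [set b] by rewrite inE.
  rewrite /sig big_setU1 //= big_set1 /blockok cards2 nab /=.
  case: (eqVneq (cl a) (cl b)) => [e|ne].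
    move/negP; case; apply/forall_inP => j; rewrite !inE => /orP [] /eqP ->;
    apply/forall_inP => j'; rewrite !inE => /orP [] /eqP ->; by rewrite ?e ?eqxx.
  by move=> _; rewrite /sgn; move: ne; case: (cl a); case: (cl b).
have E3 : \sum_(T | validT U T && compatT cl T) H T =
    \sum_(mu in CMg U cl) (\prod_(S in mu) sig S) * PS q mu zS.
  rewrite (partition_big (@imT h J) (mem (CMg U cl))) /=; last first.
    by move=> T /andP [hv hc]; exact: valid_im.
  apply: eq_bigr => mu hmu.
  rewrite (eq_bigl (fun T => bijon mu T)); last first.
    move=> T; apply/idP/idP.
      by move=> /andP [/andP [hv _] him]; exact: valid_bijon hv him.
    move=> hb; have := bijon_valid hU2 j0 hmu hb; by case/and3P => -> -> ->.
  rewrite /PS /PSg mulr_sumr; apply: eq_bigr => T hT.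
  have /and3P [_ _ /eqP him] := bijon_valid hU2 j0 hmu hT.
  rewrite /H big_split /= mulrC; congr (_ * _).
  rewrite -him big_imset //=; last by move=> u v _ _; apply: (bijon_inj hT).
have hmt := xor_modtop hy; rewrite hX in hmt.
have hcl : ~~ odd #|[set j in U | cl j]|.
  by move: hmt; rewrite /cl; case: (odd _) => //=; rewrite mul1n; lia.
have hxm : \big[Nat.lxor/0%N]_(j in U) (y j %% 2 ^ q)%N = 0%N.
  by move: hmt; case: (odd _); rewrite /= ?mul1n ?mul0n; lia.
rewrite E1 E2 E3; apply: oddz_sum_scaled; last first.
  apply: CMg_odd => //; by rewrite hU2 addnn odd_double.
move=> mu hmu.
have hmuc := CM_card hU2 hmu.
move: (hmu); rewrite inE => /andP [hp /forall_inP hb].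
have [z hz ePS] : exists2 z, oddz z & PS q mu zS = 2 ^+ (2 ^ q).-1 * z.
  apply: IH => //.
    by move=> S _; apply: xor_lt_big => j _; rewrite ltn_pmod ?expn_gt0.
  rewrite /zS -(big_trivIset (E := fun j => (y j %% 2 ^ q)%N) mu); last by case/and3P: hp.
  by rewrite (cover_partition hp).
have [e he eK] : exists2 e : int, (e = 1 \/ e = -1) & \prod_(S in mu) sig S = 2 ^+ #|mu| * e.
  apply: prod_pm2 => S hS; have /andP [h2 hcl2] := hb S hS.
  have [a [b [nab eS]]] := cards2P _ h2.
  have nab' : a \notin [set b] by rewrite inE.
  rewrite eS /sig big_setU1 //= big_set1 /sgn.
  have : cl a == cl b.
    move: hcl2 => /forall_inP /(_ a); rewrite eS !inE eqxx => /(_ isT) /forall_inP /(_ b).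
    by rewrite !inE eqxx orbT => /(_ isT).
  by case: (cl a); case: (cl b) => //= _; [right|left].
exists (e * z); first exact: oddz_sign.
rewrite eK ePS hmuc.
have ex : (2 ^ q.+1).-1 = (2 ^ q + (2 ^ q).-1)%N by rewrite expnS /h in hh *; lia.
by rewrite ex exprD; ring.
Qed.

Local Open Scope ring_scope.

Lemma perm_ffun_sum n (F : {ffun 'I_n -> 'I_n} -> int) :
  \sum_(s : 'S_n) F (pval s) = \sum_(f : {ffun 'I_n -> 'I_n} | injectiveb f) F f.
Proof.
rewrite [RHS](reindex (fun s : 'S_n => pval s)); last first.
  exists (insubd (1%g : 'S_n)) => [s _|f hf]; first exact: valKd.
  by rewrite /= insubdK.
by apply: eq_bigl => s; rewrite (valP s).
Qed.

Lemma perm_to_PS q (y : 'I_(2 ^ q) -> nat) :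
  \sum_(s : 'S_(2 ^ q)) \prod_i sylv0 q (y i) (s i) = PS q [set: 'I_(2 ^ q)] y.
Proof.
transitivity (\sum_(s : 'S_(2 ^ q)) \prod_c sylv0 q (y (s^-1%g c)) c).
  apply: eq_bigr => s _; rewrite (reindex_inj (perm_inj (s := s^-1%g))) /=.
  by apply: eq_bigr => c _; rewrite permKV.
rewrite (reindex_inj (@invg_inj _)) /=.
rewrite /PS /PSg [RHS](eq_bigl (fun f : {ffun 'I_(2 ^ q) -> 'I_(2 ^ q)} => injectiveb f)); last first.
  by move=> f; rewrite /bijon; case: (injectiveb f) => //=; apply/forallP => c; rewrite inE.
rewrite -perm_ffun_sum; apply: eq_bigr => s _; apply: eq_bigr => c _.
have -> : (s^-1^-1)%g = s by apply: invgK.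
by rewrite pvalE.
Qed.

Lemma prod_xor q (K : finType) (A : {pred K}) (f : K -> nat) a :
  (forall i, i \in A -> (f i < 2 ^ q)%N) -> (a < 2 ^ q)%N ->
  \prod_(i in A) sylv0 q (f i) a = sylv0 q (\big[Nat.lxor/0%N]_(i in A) f i) a.
Proof.
move=> hf ha.
suff : (\prod_(i in A) sylv0 q (f i) a = sylv0 q (\big[Nat.lxor/0%N]_(i in A) f i) a) /\
       (\big[Nat.lxor/0%N]_(i in A) f i < 2 ^ q)%N by case.
apply: (big_rec2 (fun (z : int) (x : nat) => z = sylv0 q x a /\ (x < 2 ^ q)%N)).
  by rewrite sylv0_0 expn_gt0.
move=> i z x hi [-> hx]; split; last by apply: lxor_lt => //; apply: hf.
by rewrite sylv0_mulx // hf.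
Qed.

Lemma lxor_injl (a u v : nat) : Nat.lxor a u = Nat.lxor a v -> u = v.
Proof.
move=> e; have := congr1 (Nat.lxor a) e.
by rewrite -!Nat.lxor_assoc Nat.lxor_nilpotent !Nat.lxor_0_l.
Qed.

Lemma intr_sum (I : finType) (F : I -> int) : (\sum_i F i)%:~R = \sum_i (F i)%:~R :> algC.
Proof. exact: (big_morph (fun z : int => z%:~R : algC) (@intrD _) (mulr0z 1)). Qed.

Lemma intr_prod (I : finType) (F : I -> int) : (\prod_i F i)%:~R = \prod_i (F i)%:~R :> algC.
Proof. exact: (big_morph (fun z : int => z%:~R : algC) (@intrM _) (mulr1z 1)). Qed.

Local Close Scope ring_scope.

Theorem proposition7 (k q c : nat) (hc : (c <= 2 ^ k - 1)%N)
  (t : (2 ^ q).-tuple nat) (ht : is_state (2 ^ (k + q)) t) :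
  suppressed (k + q) (input_state (2 ^ q) c) t <-> xor_beta q t <> 0%N.
Proof.
Local Open Scope ring_scope.
have hck : (c < 2 ^ k)%N by have := expn_gt0 2 k; lia.
have ht' : forall i : 'I_(2 ^ q), (0 < tnth t i <= 2 ^ (k + q))%N.
  by move: ht => /andP [_ /allP h] i; apply: h; apply: mem_tnth.
set x := fun i : 'I_(2 ^ q) => (tnth t i).-1.
have hx : forall i, (x i < 2 ^ (k + q))%N by move=> i; have := ht' i; rewrite /x; lia.
set y := fun i : 'I_(2 ^ q) => (x i %% 2 ^ q)%N.
have hy : forall i, (y i < 2 ^ q)%N by move=> i; rewrite /y ltn_pmod ?expn_gt0.
set r := fun i => sylv0 k (x i %/ 2 ^ q) c.
set P := \sum_(s : 'S_(2 ^ q)) \prod_i sylv0 q (y i) (s i).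
have hr : \prod_i r i != 0.
  rewrite prodf_seq_neq0; apply/allP => i _ /=; rewrite /r.
  by case: (sylv0_pm k (x i %/ 2 ^ q) c) => ->.
have hentry : forall (i j : 'I_(2 ^ q)),
    sylvester (k + q) (tnth t i) (tnth (input_state (2 ^ q) c) j) = r i * sylv0 q (y i) j.
  move=> i j; rewrite /sylvester tnth_mktuple /= -/(x i).
  have hxi := hx i.
  rewrite {1}[x i](divn_eq _ (2 ^ q)) [(j + _)%N]addnC [(2 ^ q * c)%N]mulnC sylv0_tensor //.
  - by rewrite ltn_divLR ?expn_gt0 // -expnD.
  - by rewrite ltn_pmod ?expn_gt0.
set d := (sqrtC (2 ^ (k + q))%:R)^-1 : algC.
have hd : d != 0 by rewrite invr_eq0 sqrtC_eq0 pnatr_eq0 expn_eq0.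
have hperm : permanent (scattering (k + q) (input_state (2 ^ q) c) t) =
    ((\prod_i r i) * P)%:~R * d ^+ (2 ^ q).
  rewrite intrM intr_sum mulr_sumr mulr_suml /permanent; apply: eq_bigr => s _.
  rewrite (eq_bigr (fun i => (r i * sylv0 q (y i) (s i))%:~R * d)); last first.
    by move=> i _; rewrite mxE /Umat hentry.
  rewrite big_split /= prodr_const card_ord -intr_prod big_split /= intrM.
  by rewrite intr_prod.
have hsup : suppressed (k + q) (input_state (2 ^ q) c) t <-> P = 0.
  rewrite /suppressed /amplitude hperm.
  set D := sqrtC _.
  have hD : D != 0.
    rewrite sqrtC_eq0 mulf_eq0 !pnatr_eq0 negb_or -!lt0n.
    by apply/andP; split; apply: prodn_gt0 => i; apply: fact_gt0.
  split.
    move/eqP; rewrite !mulf_eq0 invr_eq0 (negbTE hD) orbF expf_eq0 (negbTE hd) andbF orbF.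
    by rewrite intr_eq0 mulf_eq0 (negbTE hr) /= => /eqP.
  by move=> ->; rewrite mulr0 mul0r mul0r.
have hxor : xor_beta q t = \big[Nat.lxor/0%N]_(i in [set: 'I_(2 ^ q)]) y i.
  rewrite /xor_beta foldrE big_map big_tuple; apply: eq_bigl => i; by rewrite in_setT.
rewrite hsup hxor; split.
  move=> hP hX.
  have hcT : #|[set: 'I_(2 ^ q)]| = (2 ^ q)%N by rewrite cardsT card_ord.
  have [z [m hm] ePS] := core hcT (fun i _ => hy i) hX.
  move: hP; rewrite /P perm_to_PS ePS => /eqP; rewrite mulf_eq0 expf_eq0 /= hm.
  by move=> /eqP; lia.
move=> hX.
set X := \big[Nat.lxor/0%N]_(i in [set: 'I_(2 ^ q)]) y i in hX.
have hXl : (X < 2 ^ q)%N by apply: xor_lt_big => i _; apply: hy.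
have [a ha ea] := sylv0_neg (introN eqP hX) hXl.
have tinj : injective (fun j : 'I_(2 ^ q) => Ordinal (lxor_lt ha (ltn_ord j))).
  move=> j j' /(congr1 val) /= e; apply: val_inj => /=; exact: lxor_injl e.
set tau := perm tinj.
have hPn : P = - P.
  rewrite {1}/P (reindex_inj (mulIg tau)) /= /P -mulN1r mulr_sumr.
  apply: eq_bigr => s _.
  rewrite (eq_bigr (fun i => sylv0 q (y i) a * sylv0 q (y i) (s i))); last first.
    by move=> i _; rewrite permM permE /= sylv0_mulx2.
  rewrite big_split /=; congr (_ * _).
  have := prod_xor (A := [set: 'I_(2 ^ q)]) (fun i _ => hy i) ha; rewrite -/X ea => <-.
  by apply: eq_bigl => i; rewrite in_setT.
by move: hPn; lia.
Qed.
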